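(* Let $(k,\alpha)\in\Upsilon$, $w\in\operatorname{lext}(L_{k,\alpha})$, $\bar w\in\operatorname{lext}(w,L_{k,\alpha})$, let $x\in\Sigma_k$ be a letter that is a recurrent factor of $\bar w$, and let $t$ be a left infinite $\alpha$-power free word over $\Sigma_k$ with $\operatorname{occur}(t,x)=0$. Then there are finite words $w_1,w_2,g\in\Sigma_k^*$ such that $(w_1^R,w_2^R,x,g^R,t^R)\in\Gamma(k,\alpha)$, $w$ is a suffix of $gxw_2w_1$, and the left infinite word $txw_2w_1$ is $\alpha$-power free.
   Context: $\Sigma_k$ is an alphabet with $k$ letters. For a nonempty finite word $r$ and a rational $\beta\ge 1$ with $\beta|r|$ an integer, the $\beta$-power $r^\beta$ is the word $rr\cdots rt$ of length $\beta|r|$, where $t$ is a prefix of $r$. For rational $\alpha\ge1$, a word is $\alpha$-power free if it has no factor that is a $\beta$-power with $\beta\ge\alpha$, and $\alpha^+$-power free if it has no factor that is a $\beta$-power with $\beta>\alpha$; ''$\alpha$'' may denote a rational number or a symbol $\alpha^+$. $L_{k,\alpha}$ is the set of finite $\alpha$-power free words over $\Sigma_k$; an infinite word is $\alpha$-power free iff all its finite factors lie in $L_{k,\alpha}$; $L^{\mathbb N,R}_{k,\alpha}$ is the set of right infinite $\alpha$-power free words. $\Upsilon$ is the set of pairs: $(k,\alpha)$ with $k=3$ and rational $\alpha>2$; $(k,\alpha)$ with $k>3$ and rational $\alpha\ge2$; $(k,\alpha^+)$ with $k\ge3$ and rational $\alpha\ge2$. $\operatorname{occur}(w,s)$ is the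 number of occurrences of a nonempty word $s$ as a factor of $w$; $s$ is recurrent in an infinite word $w$ if $\operatorname{occur}(w,s)=\infty$. A word $w\in L$ is left extendable in $L$ if for every $n$ there is $u\in L$ with $|u|=n$ and $uw\in L$; $\operatorname{lext}(L)$ is the set of such words, and for $w\in\operatorname{lext}(L)$, $\operatorname{lext}(w,L)$ is the set of left infinite words all of whose finite suffixes lie in $L$ and which have $w$ as a suffix. The reversal $w^R$: if $w=w_1\cdots w_m$ then $w^R=w_m\cdots w_1$; if $w=\cdots w_2w_1$ is left infinite then $w^R=w_1w_2\cdots$ is right infinite (and conversely). For $(k,\alpha)\in\Upsilon$, $(w_1,w_2,x,g,t)\in\Gamma(k,\alpha)$ means: $w_1,w_2,g\in\Sigma_k^*$; $x\in\Sigma_k$; $w_1w_2xg\in L_{k,\alpha}$; $t\in L^{\mathbb N,R}_{k,\alpha}$; $\operatorname{occur}(t,x)=0$; $g$ is a prefix of $t$; $\operatorname{occur}(w_2xgy,xgy)=1$, where $y\in\Sigma_k$ is the letter with $gy$ a prefix of $t$; and $\operatorname{occur}(w_2,x)\ge\operatorname{occur}(w_1,x)$. *)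

(* Defs.v *)
From mathcomp Require Import all_boot all_order all_algebra.
Set Implicit Arguments. Unset Strict Implicit. Unset Printing Implicit Defensive.
Import Order.TTheory GRing.Theory Num.Theory.

(* Conventions:
   - The alphabet Sigma_k is 'I_k; finite words are seq 'I_k.
   - A right infinite word t = t_0 t_1 ... is a function nat -> T (t i = t_i).
   - A left infinite word ... u_2 u_1 u_0 is represented by the function
     f : nat -> T with f i = u_i (i-th letter counted from the right).
     Hence the reversal of a left infinite word is the right infinite word
     given by the very same function. *)

(* An exponent: either a rational alpha (plus = false) or alpha^+ (plus = true). *)
Record expo := Expo { ex_val : rat; ex_plus : bool }.

Local Open Scope ring_scope.

Definition forbidden (e : expo) (beta : rat) : bool :=
  if ex_plus e then ex_val e < beta else ex_val e <= beta.

Section Words.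
Variable T : eqType.

Definition is_power (r u : seq T) (beta : rat) : Prop :=
  (0 < size r)%N /\ 1 <= beta /\ beta * (size r)%:R = (size u)%:R /\
  forall i, (i < size u)%N -> onth u i = onth r (i %% size r).

Definition pfree (e : expo) (u : seq T) : Prop :=
  forall s r beta, infix s u -> is_power r s beta -> ~~ forbidden e beta.

Definition occur (w s : seq T) : nat :=
  count (fun i => take (size s) (drop i w) == s) (iota 0 (size w).+1).

Definition rfactor (f : nat -> T) (i n : nat) : seq T := mkseq (fun j => f (i + j)) n.

Definition lfactor (f : nat -> T) (i n : nat) : seq T := rev (rfactor f i n).

Definition pfree_right (e : expo) (f : nat -> T) : Prop :=
  forall i n, pfree e (rfactor f i n).

Definition pfree_left (e : expo) (f : nat -> T) : Prop :=
  forall i n, pfree e (lfactor f i n).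

Definition occurs_right (f : nat -> T) (i : nat) (s : seq T) : Prop :=
  rfactor f i (size s) = s.
Definition occurs_left (f : nat -> T) (i : nat) (s : seq T) : Prop :=
  lfactor f i (size s) = s.

Definition recurrent_left (f : nat -> T) (s : seq T) : Prop :=
  forall N, exists i, (N <= i)%N /\ occurs_left f i s.

Definition in_lext (e : expo) (w : seq T) : Prop :=
  pfree e w /\ forall n, exists u, size u = n /\ pfree e u /\ pfree e (u ++ w).

Definition in_lext_w (e : expo) (w : seq T) (f : nat -> T) : Prop :=
  (forall n, pfree e (lfactor f 0 n)) /\ lfactor f 0 (size w) = w.

(* the left infinite word f u (finite word u appended on the right of f) *)
Definition lcat (f : nat -> T) (u : seq T) : nat -> T :=
  fun i => if (i < size u)%N then nth (f 0%N) (rev u) i else f (i - size u)%N.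

Definition Gamma (e : expo) (w1 w2 : seq T) (x : T) (g : seq T) (t : nat -> T) : Prop :=
  let y := t (size g) in
  pfree e (w1 ++ w2 ++ x :: g) /\
  pfree_right e t /\
  (forall i, ~ occurs_right t i [:: x]) /\
  rfactor t 0 (size g) = g /\
  occur (w2 ++ x :: g ++ [:: y]) (x :: g ++ [:: y]) = 1%N /\
  (occur w1 [:: x] <= occur w2 [:: x])%N.

End Words.

Definition Upsilon (k : nat) (e : expo) : Prop :=
  [\/ (k = 3%N /\ ex_plus e = false /\ 2 < ex_val e),
      ((3 < k)%N /\ ex_plus e = false /\ 2 <= ex_val e)
      | ((3 <= k)%N /\ ex_plus e = true /\ 2 <= ex_val e)].

(* Main.v *)
Require Import Defs.
From mathcomp Require Import all_boot all_order all_algebra.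
From mathcomp Require Import zify ring lra.
Set Implicit Arguments. Unset Strict Implicit. Unset Printing Implicit Defensive.
Import Order.TTheory GRing.Theory Num.Theory.

Section Aux.
Local Open Scope ring_scope.
Variable T : eqType.

Lemma onth_drop (s : seq T) a j : onth (drop a s) j = onth s (a + j).
Proof. by rewrite !onthE map_drop nth_drop. Qed.

Lemma onth_take (s : seq T) m j : (j < m)%N -> onth (take m s) j = onth s j.
Proof. by move=> h; rewrite !onthE map_take nth_take. Qed.

Lemma onth_catr (u v : seq T) j : onth (u ++ v) (size u + j) = onth v j.
Proof. by rewrite !onthE map_cat nth_cat size_map ltnNge leq_addr /= addKn. Qed.

Lemma pfreeP (e : expo) (s : seq T) :
  pfree e s <-> forall a m p, (a + m <= size s)%N -> (0 < p)%N -> (p <= m)%N ->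
    (forall j, (a <= j)%N -> (j + p < a + m)%N -> onth s j = onth s (j + p)) ->
    ~~ forbidden e (m%:R / p%:R).
Proof.
split.
- move=> H a m p Ham Hp Hpm Hper.
  set s' := take m (drop a s).
  have Hs' : size s' = m by rewrite size_takel // size_drop; lia.
  have Hos j : (j < m)%N -> onth s' j = onth s (a + j).
    by move=> hj; rewrite onth_take // onth_drop.
  have Hinf : infix s' s by apply: infix_trans (infix_take _ _) (infix_drop _ _).
  apply: (H s' (take p s')) => //.
  have Hp0 : (0 < p%:R :> rat) by rewrite ltr0n.
  split; first by rewrite size_takel // Hs'.
  split; first by rewrite ler_pdivlMr // mul1r ler_nat.
  split; first by rewrite size_takel ?Hs' // mulfVK // gt_eqF.
  rewrite Hs' size_takel ?Hs' // => i Hi.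
  have Hmod := ltn_pmod i Hp.
  rewrite onth_take //.
  have key : forall q r0, (r0 < p)%N -> (r0 + q * p < m)%N -> onth s' (r0 + q * p) = onth s' r0.
    elim=> [|q IH] r0 Hr0 Hq; first by rewrite mul0n addn0.
    rewrite -(IH r0) //; last by lia.
    rewrite !Hos; try lia.
    have -> : (a + (r0 + q.+1 * p) = (a + (r0 + q * p)) + p)%N by rewrite mulSn; lia.
    by symmetry; apply: Hper; rewrite ?mulSn; lia.
  rewrite {1}(divn_eq i p) addnC key //. rewrite addnC -divn_eq //.
- move=> H s0 r beta /infixP [u [u' Hs]] [Hr [H1 [Hb Hper]]].
  have Hp0 : (0 < (size r)%:R :> rat) by rewrite ltr0n.
  have -> : beta = (size s0)%:R / (size r)%:R by rewrite -Hb mulfK // gt_eqF.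
  have Hpm : (size r <= size s0)%N.
    by rewrite -(ler_nat rat) -Hb -{1}(mul1r (size r)%:R) ler_pM2r.
  apply: (H (size u) (size s0) (size r)) => //.
    by rewrite Hs !size_cat; lia.
  move=> j Hj Hjp. rewrite Hs.
  have -> : j = (size u + (j - size u))%N by lia.
  rewrite -addnA !onth_catr !onth_cat.
  have -> : (j - size u < size s0)%N by lia.
  have -> : (j - size u + size r < size s0)%N by lia.
  rewrite !Hper; try lia.
  by rewrite -modnDmr modnn addn0.
Qed.
End Aux.

Section Fun.
Variable T : eqType.
Implicit Types (f : nat -> T).

Lemma onth_rfactor f i n j : (j < n)%N -> onth (rfactor f i n) j = Some (f (i + j)).
Proof.
move=> h; rewrite onthE /rfactor /mkseq -map_comp (nth_map 0) ?size_iota //.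
by rewrite nth_iota.
Qed.

Lemma onth_lfactor f i n j : (j < n)%N -> onth (lfactor f i n) j = Some (f (i + (n - j.+1))).
Proof.
move=> h; rewrite onthE /lfactor map_rev nth_rev size_map size_mkseq //.
rewrite -onthE onth_rfactor //; lia.
Qed.

Definition WF (e : expo) f i n := forall a m p, (i <= a)%N -> (a + m <= i + n)%N -> (0 < p)%N ->
  (p <= m)%N -> (forall j, (a <= j)%N -> (j + p < a + m)%N -> f j = f (j + p)) ->
  ~~ forbidden e (m%:R / p%:R)%R.

Lemma WF_r e f i n : WF e f i n -> pfree e (rfactor f i n).
Proof.
move=> H; apply/pfreeP => a m p; rewrite size_mkseq => Ham Hp Hpm Hper.
apply: (H (i + a)%N) => //; try lia.
move=> j Hj Hjp.
have := Hper (j - i)%N; rewrite !onth_rfactor; try lia.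
have -> : (i + (j - i) = j)%N by lia.
have -> : (i + (j - i + p) = j + p)%N by lia.
move=> h; have [] : Some (f _) = Some (f _) := h ltac:(lia) ltac:(lia); done.
Qed.

Lemma WF_l e f i n : WF e f i n -> pfree e (lfactor f i n).
Proof.
move=> H; apply/pfreeP => a m p; rewrite size_rev size_mkseq => Ham Hp Hpm Hper.
apply: (H (i + n - a - m)%N) => //; try lia.
move=> J HJ HJp.
have := Hper (i + n - 1 - J - p)%N; rewrite !onth_lfactor; try lia.
have -> : (i + (n - (i + n - 1 - J - p).+1) = J + p)%N by lia.
have -> : (i + (n - (i + n - 1 - J - p + p).+1) = J)%N by lia.
move=> h; have [] : Some (f _) = Some (f _) := h ltac:(lia) ltac:(lia); done.
Qed.

Lemma lfactor_WF e f i n : pfree e (lfactor f i n) -> WF e f i n.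
Proof.
move/pfreeP => H A m p HA HAm Hp Hpm Hper.
apply: (H (i + n - A - m)%N) => //; rewrite ?size_rev ?size_mkseq; try lia.
move=> j Hj Hjp.
rewrite !onth_lfactor; try lia.
have -> : (i + (n - j.+1) = (i + (n - (j + p).+1)) + p)%N by lia.
by rewrite -Hper //; lia.
Qed.

Lemma rfactor_WF e f i n : pfree e (rfactor f i n) -> WF e f i n.
Proof.
move/pfreeP => H A m p HA HAm Hp Hpm Hper.
apply: (H (A - i)%N) => //; rewrite ?size_mkseq; try lia.
move=> j Hj Hjp.
rewrite !onth_rfactor; try lia.
by rewrite addnA Hper //; lia.
Qed.

End Fun.

Lemma forb2 k e m p : Upsilon k e -> (0 < p)%N -> forbidden e (m%:R / p%:R)%R -> (2 * p <= m)%N.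
Proof.
move=> HU Hp.
have H2 : (2 <= ex_val e)%R by case: HU => [[_ [_ /ltW]]|[_ [_]]|[_ [_]]].
have Hp0 : (0 < p%:R :> rat)%R by rewrite ltr0n.
rewrite /forbidden => Hf.
have : (2 <= m%:R / p%:R :> rat)%R.
  case: (ex_plus e) Hf => Hf; apply: le_trans H2 _ => //. exact: ltW.
by rewrite ler_pdivlMr // -natrM ler_nat mulnC.
Qed.

Section Seqs.
Variable T : eqType.
Implicit Types (f g : nat -> T).

Lemma rfactorD f i a b : rfactor f i (a + b) = rfactor f i a ++ rfactor f (i + a) b.
Proof.
rewrite /rfactor /mkseq iotaD map_cat; congr (_ ++ _).
rewrite add0n -[a in iota a]addn0 iotaDl -map_comp; apply: eq_map => j /=.
by congr f; exact: addnA.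
Qed.

Lemma rfactor_ext f g i n : (forall j, (j < n)%N -> f (i + j) = g (i + j)) ->
  rfactor f i n = rfactor g i n.
Proof.
move=> H; rewrite /rfactor /mkseq; apply/eq_in_map => j.
by rewrite mem_iota add0n => /H.
Qed.

Lemma lfactor_ext f g i n : (forall j, (j < n)%N -> f (i + j) = g (i + j)) ->
  lfactor f i n = lfactor g i n.
Proof. by move=> H; rewrite /lfactor (rfactor_ext H). Qed.

Lemma lfactor_S f i n : lfactor f i n.+1 = f (i + n) :: lfactor f i n.
Proof. by rewrite /lfactor /rfactor mkseqS rev_rcons. Qed.

Lemma rfactor_S f i n : rfactor f i n.+1 = rcons (rfactor f i n) (f (i + n)).
Proof. by rewrite /rfactor mkseqS. Qed.

End Seqs.

From Stdlib Require Import Classical.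

Section Main.
Variables (k : nat) (e : expo) (wbar t : nat -> 'I_k) (x : 'I_k).
Hypothesis HU : Upsilon k e.
Hypothesis Hnx : forall i, t i <> x.
Hypothesis Hrec : forall N, exists i, (N <= i)%N /\ wbar i = x.
Hypothesis WFt : forall a m p, (0 < p)%N -> (p <= m)%N ->
  (forall j, (a <= j)%N -> (j + p < a + m)%N -> t j = t (j + p)) -> ~~ forbidden e (m%:R / p%:R)%R.
Hypothesis WFw : forall a m p, (0 < p)%N -> (p <= m)%N ->
  (forall j, (a <= j)%N -> (j + p < a + m)%N -> wbar j = wbar (j + p)) -> ~~ forbidden e (m%:R / p%:R)%R.

Definition agree P l := forall j, (j < l)%N -> wbar (P.+1 + j) = t j.

Lemma exlam P : exists l, wbar (P.+1 + l) != t l.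
Proof.
have [i [Hi Hw]] := Hrec P.+1; exists (i - P.+1)%N; rewrite subnKC // Hw.
by apply/eqP => h; exact: (Hnx (esym h)).
Qed.

Definition lam P := ex_minn (exlam P).

Lemma agreeP P l : agree P l <-> (l <= lam P)%N.
Proof.
rewrite /lam; case: ex_minnP => m Hm Hmin; split.
- move=> H; rewrite leqNgt; apply/negP => Hlt; by move: Hm; rewrite H // eqxx.
- move=> Hl j Hj; apply/eqP; apply/negPn/negP => /Hmin; lia.
Qed.

Definition Good P := forall q l, (q < P)%N -> wbar q = x -> agree q l ->
  (P <= 2 * q + 1 + l)%N -> agree P l.

Lemma exists_good N : exists P, (N <= P)%N /\ wbar P = x /\ Good P.
Proof.
case: (classic (exists c, forall q, wbar q = x -> (lam q <= c)%N)) => [[c Hc]|Hub].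
- have key : forall c n0, (forall q, (n0 <= q)%N -> wbar q = x -> (lam q <= c)%N) ->
      (forall n, exists q, (n <= q)%N /\ wbar q = x /\ lam q = c) ->
      exists P, (N <= P)%N /\ wbar P = x /\ Good P.
    move=> c0 n0 Hb Hinf; set C := \max_(q < n0) lam q.
    have HC : forall q, (q < n0)%N -> (lam q <= C)%N.
      by move=> q Hq; exact: (@leq_bigmax _ (fun i : 'I_n0 => lam i) (Ordinal Hq)).
    have [P [HP [HPx HPc]]] := Hinf (N + 2 * n0 + C + 2)%N.
    exists P; split; [lia | split => //].
    move=> q l Hq Hqx /agreeP Hl HPq; apply/agreeP; rewrite HPc.
    case: (leqP n0 q) => Hn0; first exact: leq_trans Hl (Hb _ Hn0 Hqx).
    have := HC _ Hn0; lia.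
  suff: forall c n0, (forall q, (n0 <= q)%N -> wbar q = x -> (lam q <= c)%N) ->
      exists P, (N <= P)%N /\ wbar P = x /\ Good P.
    by move/(_ c 0%N); apply => q _; exact: Hc.
  elim=> [|c' IH] n0 Hb.
  + case: (classic (forall n, exists q, (n <= q)%N /\ wbar q = x /\ lam q = 0%N)) => Hi.
      exact: (key 0%N n0).
    exfalso; apply: Hi => n; have [q [Hq Hqx]] := Hrec (n + n0)%N.
    exists q; split; [lia|split => //]; have := Hb q ltac:(lia) Hqx; lia.
  + case: (classic (forall n, exists q, (n <= q)%N /\ wbar q = x /\ lam q = c'.+1)) => Hi.
      exact: (key c'.+1 n0).
    have [n1 Hn1] : exists n1, ~ exists q, (n1 <= q)%N /\ wbar q = x /\ lam q = c'.+1.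
      by apply: NNPP => H; apply: Hi => n; apply: NNPP => H'; apply: H; exists n.
    apply: (IH (maxn n0 n1)) => q Hq Hqx.
    have := Hb q ltac:(lia) Hqx.
    case: (ltngtP (lam q) c'.+1) => //; try lia.
    move=> Heq _; exfalso; apply: Hn1; exists q; split => //; lia.
- set K := \max_(q < N) lam q.
  have [q0 [Hq0x Hq0K]] : exists q, wbar q = x /\ (K < lam q)%N.
    apply: NNPP => H; apply: Hub; exists K => q Hqx; rewrite leqNgt; apply/negP => Hlt.
    by apply: H; exists q.
  have exP : exists q, (wbar q == x) && (K < lam q)%N by exists q0; rewrite Hq0x eqxx Hq0K.
  case: (ex_minnP exP) => P /andP [/eqP HPx HPK] Hmin.
  exists P; split; [|split => //].
  + rewrite leqNgt; apply/negP => HPN.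
    have := @leq_bigmax _ (fun i : 'I_N => lam i) (Ordinal HPN); rewrite -/K /=; lia.
  + move=> q l Hq Hqx /agreeP Hl _; apply/agreeP.
    have : ~~ (K < lam q)%N.
      apply/negP => HK; have := Hmin q; rewrite Hqx eqxx HK => /(_ isT); lia.
    lia.
Qed.

Definition G P := fun i => if (i < P.+1)%N then wbar i else t (i - P.+1).

Lemma core P : wbar P = x -> Good P -> forall a m p, (0 < p)%N -> (p <= m)%N ->
  (forall j, (a <= j)%N -> (j + p < a + m)%N -> G P j = G P (j + p)) ->
  ~~ forbidden e (m%:R / p%:R)%R.
Proof.
move=> HPx HG a m p Hp Hpm Hper; apply/negP => Hf.
have H2 := forb2 HU Hp Hf.
have Gw : forall j, (j <= P)%N -> G P j = wbar j.
  by move=> j Hj; rewrite /G; have -> : (j < P.+1)%N = true by lia.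
have Gt : forall j, G P (P.+1 + j) = t j.
  move=> j; rewrite /G; have -> : (P.+1 + j < P.+1)%N = false by lia.
  by rewrite addKn.
case: (ltnP P a) => HaP.
- suff : ~~ forbidden e (m%:R / p%:R)%R by rewrite Hf.
  apply: (@WFt (a - P.+1) m p Hp Hpm) => j Hj Hjp.
  have := Hper (P.+1 + j) ltac:(lia) ltac:(lia).
  by rewrite -addnA !Gt.
case: (leqP (a + m) P.+1) => HamP.
- suff : ~~ forbidden e (m%:R / p%:R)%R by rewrite Hf.
  apply: (@WFw a m p Hp Hpm) => j Hj Hjp.
  by have := Hper j Hj Hjp; rewrite !Gw //; lia.
set l := (a + m - P.+1)%N.
have Hlp : (l < p)%N.
  rewrite ltnNge; apply/negP => Hpl.
  have := Hper P HaP ltac:(lia).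
  have -> : (P + p = P.+1 + (p.-1))%N by lia.
  rewrite Gt Gw // HPx => h; exact: (Hnx (esym h)).
set q := (P - p)%N.
have Hq : (a <= q)%N by lia.
have Hqx : wbar q = x.
  have := Hper q Hq ltac:(lia); rewrite Gw; last by lia.
  have -> : (q + p = P)%N by lia.
  by rewrite Gw // HPx.
have Hag : agree q l.
  move=> j Hj; rewrite -Gw; last by lia.
  have := Hper (q.+1 + j) ltac:(lia) ltac:(lia).
  have -> : (q.+1 + j + p = P.+1 + j)%N by lia.
  by rewrite Gt.
have HPl : (P <= 2 * q + 1 + l)%N by lia.
have HaP' := HG q l ltac:(lia) Hqx Hag HPl.
suff : ~~ forbidden e (m%:R / p%:R)%R by rewrite Hf.
  apply: (@WFw a m p Hp Hpm) => j Hj Hjp.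
have Ew : forall i, (i < a + m)%N -> wbar i = G P i.
  move=> i Hi; case: (leqP i P) => HiP; first by rewrite Gw.
  have -> : i = (P.+1 + (i - P.+1))%N by lia.
  rewrite Gt HaP' //; lia.
rewrite !Ew; try lia.
exact: Hper.
Qed.

End Main.

Lemma rfactorE (T : eqType) (f : nat -> T) i n : rfactor f i n = mkseq (fun j => f (i + j)%N) n.
Proof. by []. Qed.

Unset Implicit Arguments.
Set Strict Implicit.

Theorem mainTheorem7 (k : nat) (e : expo) (w : seq 'I_k) (wbar : nat -> 'I_k)
    (x : 'I_k) (t : nat -> 'I_k) :
  Upsilon k e ->
  in_lext e w ->
  in_lext_w e w wbar ->
  recurrent_left wbar [:: x] ->
  pfree_left e t ->
  (forall i, ~ occurs_left t i [:: x]) ->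
  exists w1 w2 g : seq 'I_k,
    [/\ Gamma e (rev w1) (rev w2) x (rev g) t,
        suffix w (g ++ x :: w2 ++ w1) &
        pfree_left e (lcat t (x :: w2 ++ w1))].
Proof.
move=> HU _ [Hbar Hwsuf] Hrecl Ht Hnxl.
have Hnx : forall i, t i <> x.
  by move=> i Hi; apply: (Hnxl i); rewrite /occurs_left /= lfactor_S addn0 Hi.
have Hrec : forall N, exists i, (N <= i)%N /\ wbar i = x.
  move=> N; have [i [Hi Ho]] := Hrecl N; exists i; split => //.
  by move: Ho; rewrite /occurs_left /= lfactor_S addn0 => -[].
have WFt : forall a m p, (0 < p)%N -> (p <= m)%N ->
  (forall j, (a <= j)%N -> (j + p < a + m)%N -> t j = t (j + p)) -> ~~ forbidden e (m%:R / p%:R)%R.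
  by move=> a m p; apply: (lfactor_WF (Ht a m)).
have WFw : forall a m p, (0 < p)%N -> (p <= m)%N ->
  (forall j, (a <= j)%N -> (j + p < a + m)%N -> wbar j = wbar (j + p)) -> ~~ forbidden e (m%:R / p%:R)%R.
  by move=> a m p; apply: (lfactor_WF (Hbar (a + m))).
have [P [HNP [HPx HG]]] := exists_good Hnx Hrec (size w).
have Hcore := core HU Hnx WFt WFw HPx HG.
set w2 := lfactor wbar 0 P.
have Hxw2 : lfactor wbar 0 P.+1 = x :: w2 by rewrite lfactor_S add0n HPx.
exists [::], w2, (lfactor t 0 P).
have HWF : forall i n, WF e (G wbar t P) i n.
  move=> i n; rewrite /WF => a m p _ _ Hp Hpm Hper; exact: (Hcore a m p Hp Hpm Hper).
have Hlcat : lcat t (x :: w2 ++ [::]) =1 G wbar t P.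
  move=> i; rewrite /lcat cats0 -Hxw2 size_rev size_mkseq /G.
  case: ifP => // Hi; rewrite /lfactor revK rfactorE nth_mkseq //.
have Hsx : forall j, (j < P.+1)%N -> nth x (x :: rfactor t 0 P ++ [:: t P]) j.+1 = t j.
  by move=> j Hj; rewrite /= cats1 -[t P]/(t (0 + P)%N) -rfactor_S rfactorE nth_mkseq.
split.
- rewrite /Gamma /=.
  split; [|split; [|split; [|split; [|split]]]].
  + have -> : rev w2 ++ x :: rev (lfactor t 0 P) = rfactor (G wbar t P) 0 (P.+1 + P).
      rewrite rfactorD rfactor_S /w2 /lfactor !revK add0n.
      have -> : rfactor (G wbar t P) 0 P = rfactor wbar 0 P.
        apply: rfactor_ext => j Hj; rewrite /G add0n; have -> : (j < P.+1)%N = true by lia. done.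
      have -> : rfactor (G wbar t P) P.+1 P = rfactor t 0 P.
        rewrite !rfactorE; apply: eq_mkseq => j; rewrite /G.
        have -> : (P.+1 + j < P.+1)%N = false by lia. by rewrite addKn.
      by rewrite /G ltnSn HPx cat_rcons.
    exact: WF_r.
  + move=> i n; apply: WF_r => a m p _ _ Hp Hpm Hper; exact: (WFt a m p Hp Hpm Hper).
  + move=> i; rewrite /occurs_right rfactor_S addn0 /= => -[]; exact: Hnx.
  + by rewrite /lfactor revK size_mkseq.
  + rewrite /w2 /lfactor !revK size_mkseq.
    set S := x :: rfactor t 0 P ++ [:: t P].
    have HsS : size S = P.+2 by rewrite /S /= size_cat size_mkseq addn1.
    have HsW : size (rfactor wbar 0 P) = P by rewrite size_mkseq.
    rewrite /occur (@eq_in_count _ _ (pred1 P)).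
      rewrite count_uniq_mem ?iota_uniq // mem_iota size_cat HsW HsS.
      by have -> : (0 <= P < 0 + (P + P.+2).+1)%N = true by lia.
    move=> i; rewrite mem_iota size_cat HsW HsS /= => Hi.
    case: (ltngtP i P) => Hip.
    * idtac.
      apply/negbTE/eqP => H.
      have := congr1 (fun s => nth x s (P - i)) H.
      rewrite /= nth_take ?HsS; last by lia.
      rewrite nth_drop nth_cat HsW.
      have -> : (i + (P - i) < P)%N = false by lia.
      have -> : (i + (P - i) - P = 0)%N by lia.
      have -> : (P - i = (P - i - 1).+1)%N by lia.
      rewrite Hsx; last by lia.
      rewrite /S /= => h; exact: (Hnx _ (esym h)).
    * idtac.
      apply: negbTE; apply/eqP => H.
      have := congr1 size H; rewrite size_take size_drop size_cat HsW HsS.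
      case: ifP; lia.
    * subst i; apply/eqP.
      by rewrite drop_size_cat // -HsS take_size.
  + by [].
- rewrite cats0 -Hxw2; apply: suffix_catr.
  rewrite (_ : P.+1 = size w + (P.+1 - size w))%N; last by lia.
  rewrite /lfactor rfactorD rev_cat; apply: suffix_catr; rewrite -/(lfactor wbar 0 (size w)) Hwsuf; exact: suffix_refl.
- move=> i n; rewrite (@lfactor_ext _ _ (G wbar t P)); first exact: WF_l.
  by move=> j _; exact: Hlcat.
Qed.
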